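(* There exist instances of the multi-agent binary-action contract model (described in the context), with additive reward functions and $n$ agents for every $n$, whose price of equality is $\Omega\left(\frac{\log n}{\log\log n}\right)$.
   Context: Model: principal and agents $A=[n]$; each agent $i$ has a finite action set $T_i$ (pairwise disjoint), $T=\bigsqcup_iT_i$, costs $c_j\ge0$ with $c(S_i)=\sum_{j\in S_i}c_j$; in the binary-action model $|T_i|=1$ for all $i$. Reward $f:2^T\to[0,1]$ monotone, $f(\emptyset)=0$; $f$ is additive if $f(S)=\sum_{a\in S}f(\{a\})$. Contract $\boldsymbol{\alpha}\in[0,1]^A$; agent $i$'s utility $\alpha_if(S)-c(S\cap T_i)$; $S\in\mathsf{NE}(\boldsymbol{\alpha})$ (pure Nash equilibrium) if no agent can gain by changing her own subset of actions. Principal's utility $(1-\sum_i\alpha_i)f(S)$. A contract is equal-pay if all its nonzero entries are equal. The price of equality of an instance is $\dfrac{\max_{\boldsymbol{\alpha},\,S\in\mathsf{NE}(\boldsymbol{\alpha})}(1-\sum_i\alpha_i)f(S)}{\max_{\boldsymbol{\alpha}\text{ equal-pay},\,S\in\mathsf{NE}(\boldsymbol{\alpha})}(1-\sum_i\alpha_i)f(S)}$. *)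

(* Defs.v *)
From HB Require Import structures.
From mathcomp Require Import all_boot all_order all_algebra.
From mathcomp Require Import classical_sets reals exp.
Set Implicit Arguments. Unset Strict Implicit. Unset Printing Implicit Defensive.
Import Order.TTheory GRing.Theory Num.Theory.
Local Open Scope ring_scope.
Local Open Scope classical_set_scope.

(* Binary-action model with n agents: agent i has the single action i, so the
   set T of all actions is identified with 'I_n and S ⊆ T with {set 'I_n}. *)
Section Model.
Variables (R : realType) (n : nat).
Variables (cost : 'I_n -> R) (f : {set 'I_n} -> R).

Definition valid_instance : Prop :=
  (forall i, 0 <= cost i) /\
  f finset.set0 = 0 /\
  (forall S1 S2 : {set 'I_n}, S1 \subset S2 -> f S1 <= f S2) /\
  (forall S, 0 <= f S <= 1).

Definition additive_reward : Prop :=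
  forall S : {set 'I_n}, f S = \sum_(i in S) f [set i].

Definition valid_contract (alpha : 'I_n -> R) : Prop :=
  forall i, 0 <= alpha i <= 1.

Definition equal_pay (alpha : 'I_n -> R) : Prop :=
  forall i j, alpha i != 0 -> alpha j != 0 -> alpha i = alpha j.

Definition agent_util (alpha : 'I_n -> R) (i : 'I_n) (S : {set 'I_n}) : R :=
  alpha i * f S - (if i \in S then cost i else 0).

(* pure Nash equilibrium: no agent gains by changing her own subset of actions
   (T_i = {i}, so her options are to include i or not). *)
Definition is_NE (alpha : 'I_n -> R) (S : {set 'I_n}) : Prop :=
  forall i : 'I_n, forall b : bool,
    agent_util alpha i (if b then i |: S else S :\ i) <= agent_util alpha i S.

Definition principal_util (alpha : 'I_n -> R) (S : {set 'I_n}) : R :=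
  (1 - \sum_i alpha i) * f S.

Definition opt_values (P : ('I_n -> R) -> Prop) : set R :=
  [set u | exists alpha S, valid_contract alpha /\ P alpha /\ is_NE alpha S /\
                           u = principal_util alpha S].

Definition OPT : R := sup (opt_values (fun _ => True)).
Definition OPT_equal_pay : R := sup (opt_values equal_pay).

Definition price_of_equality : R := OPT / OPT_equal_pay.
End Model.

(* Main.v *)
Require Import Defs.
From HB Require Import structures.
From mathcomp Require Import all_boot all_order all_algebra.
From mathcomp Require Import classical_sets reals exp.
From mathcomp Require Import ring lra zify.
Import Order.TTheory GRing.Theory Num.Theory.
Local Open Scope ring_scope.


Section Gen.
Variables (R : realType) (n : nat) (w cost : 'I_n -> R).
Definition fw (S : {set 'I_n}) : R := \sum_(i in S) w i.

Lemma NE_suff alpha (S : {set 'I_n}) :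
  (forall i, i \in S -> cost i <= alpha i * w i) ->
  (forall i, i \notin S -> alpha i * w i <= cost i) ->
  is_NE cost fw alpha S.
Proof.
move=> Hin Hout i b; rewrite /agent_util /fw.
have [iS|iS] := boolP (i \in S); case: b.
- have -> : i |: S = S by apply/setP => j; rewrite !inE; case: eqP => // ->.
  by rewrite iS.
- have E : \sum_(j in S) w j = w i + \sum_(j in S :\ i) w j := big_setD1 _ iS.
  rewrite E setD11; have := Hin i iS; lra.
- have E : \sum_(j in i |: S) w j = w i + \sum_(j in S) w j := big_setU1 _ iS.
  rewrite E setU11; have := Hout i iS; lra.
- have -> : S :\ i = S.
    apply/setP => j; rewrite !inE; case: eqP => // ->; by rewrite (negbTE iS).
  by rewrite (negbTE iS).
Qed.

Lemma NE_nec alpha (S : {set 'I_n}) i : is_NE cost fw alpha S -> i \in S -> cost i <= alpha i * w i.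
Proof.
move=> /(_ i false) /=; rewrite /agent_util /fw => H iS.
have E : \sum_(j in S) w j = w i + \sum_(j in S :\ i) w j := big_setD1 _ iS.
move: H; rewrite E setD11.
rewrite iS; lra.
Qed.
End Gen.


Section Inst.
Variables (R : realType) (m : nat).
Hypothesis m2 : (2 <= m)%N.
Let K := (2 * m)%N.
Definition lev (j : nat) := trunc_log K j.
Definition D (j : nat) := (m * K ^ (lev j).+1)%N.

Lemma K1 : (1 < K)%N. Proof. rewrite /K; lia. Qed.
Lemma D_gt0 j : (0 < D j)%N.
Proof. rewrite /D muln_gt0 expn_gt0; have := K1; lia. Qed.

Lemma sum_levels t :
  \sum_(0 <= i < K ^ t - 1) ((D i.+1)%:R : R)^-1 = t%:R * (1 - K%:R^-1) / m%:R.
Proof.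
elim: t => [|t IH]; first by rewrite expn0 subnn big_geq // mul0r mul0r.
have Kt : (1 <= K ^ t)%N by rewrite expn_gt0; have := K1; lia.
have KtS : (K ^ t <= K ^ t.+1)%N by rewrite leq_exp2l //; have := K1; lia.
rewrite (big_cat_nat (n := K ^ t - 1)) //=; last by lia.
rewrite IH.
have -> : \sum_(K ^ t - 1 <= i < K ^ t.+1 - 1) ((D i.+1)%:R : R)^-1
          = \sum_(K ^ t - 1 <= i < K ^ t.+1 - 1) ((m * K ^ t.+1)%:R : R)^-1.
  apply: eq_big_nat => i /andP [h1 h2].
  rewrite /D /lev (trunc_log_eq (n := t)) //; first exact: K1.
  by apply/andP; split; lia.
rewrite sumr_const_nat.
have -> : (K ^ t.+1 - 1 - (K ^ t - 1) = K ^ t * (K - 1))%N.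
  rewrite expnS mulnBr muln1 mulnC; lia.
have Km : (K%:R : R) = 2 * m%:R by rewrite /K natrM.
have m0 : (0 : R) < m%:R by rewrite ltr0n; lia.
have Kt0 : (0 : R) < (K ^ t)%:R by rewrite ltr0n; lia.
rewrite -[_ *+ (K ^ t * (K - 1))]mulr_natr !natrM natrB; last by have := K1; lia.
rewrite expnS natrM Km -[t.+1]addn1 natrD.
field; by rewrite !gt_eqF.
Qed.
End Inst.


Lemma sum_sub (R : realType) (I : finType) (F : I -> R) (S T : {set I}) :
  (forall i, 0 <= F i) -> S \subset T -> \sum_(i in S) F i <= \sum_(i in T) F i.
Proof.
move=> F0 ST.
have E : \sum_(i in T) F i = \sum_(i in T :&: S) F i + \sum_(i in T :\: S) F i
  := big_setID _ _.
by rewrite E (finset.setIidPr ST) lerDl sumr_ge0.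
Qed.

Lemma sum_ind_le (R : realType) n X :
  \sum_(i < n) (((i < X)%N)%:R : R) <= X%:R.
Proof.
have -> : \sum_(i < n) (((i < X)%N)%:R : R) = (minn n X)%:R.
  elim: n => [|n IH]; first by rewrite big_ord0 min0n.
  rewrite big_ord_recr /= IH -natrD; congr (_%:R); case: ltnP => /= h; lia.
by rewrite ler_nat; lia.
Qed.

Lemma sum_subT (R : realType) (I : finType) (F : I -> R) (S : {set I}) :
  (forall i, 0 <= F i) -> \sum_(i in S) F i <= \sum_i F i.
Proof.
move=> F0.
have E : \sum_i F i = \sum_(i | i \in S) F i + \sum_(i | ~~ (i \in S)) F i
  := bigID _ _ _.
by rewrite E lerDl sumr_ge0.
Qed.


Lemma help1 (R : realType) (x s A : R) : x != 0 -> x * (s * (A / (2 * x))) = s * (A / 2).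
Proof. by move=> h; field; rewrite h. Qed.
Lemma help2 (R : realType) (x : R) : x != 0 -> 2 / x = x^-1 + x^-1.
Proof. by move=> h; field. Qed.

Section Inst2.
Variables (R : realType) (m n : nat).
Hypothesis m2 : (2 <= m)%N.
Hypothesis hn : ((2 * m) ^ m <= n)%N.
Let K := (2 * m)%N.

Definition realb (i : nat) := (i.+1 < K ^ m)%N.
Definition wv (i : 'I_n) : R := if realb i then ((D m i.+1)%:R)^-1 else 0.
Local Notation fv := (@fw R n wv).
Definition cst (i : 'I_n) : R := if realb i then wv i ^+ 2 / 2 else 1.

Lemma wv_ge0 i : 0 <= wv i.
Proof. rewrite /wv; case: ifP => // _; by rewrite invr_ge0 ler0n. Qed.

Lemma wv_gt0 (i : 'I_n) : realb i -> 0 < wv i.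
Proof. by rewrite /wv => ->; rewrite invr_gt0 ltr0n D_gt0. Qed.

Lemma wv_le1 i : wv i <= 1.
Proof.
rewrite /wv; case: ifP => // _.
by rewrite invf_le1 ?ltr0n ?D_gt0 // ler1n D_gt0.
Qed.

Lemma cst_ge0 i : 0 <= cst i.
Proof. rewrite /cst; case: ifP => // _; have := wv_ge0 i; nra. Qed.

Lemma total : \sum_(i : 'I_n) wv i = 1 - K%:R^-1.
Proof.
have Km : (1 <= K ^ m)%N by rewrite expn_gt0; rewrite /K; lia.
have hn' : (K ^ m <= n)%N := hn.
have -> : \sum_(i : 'I_n) wv i = \sum_(0 <= i < n) (if realb i then ((D m i.+1)%:R : R)^-1 else 0).
  by rewrite big_mkord.
rewrite (big_cat_nat (n := K ^ m - 1)) //=; last by lia.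
rewrite [X in _ + X]big1_seq ?addr0; last first.
  move=> i /andP [_]; rewrite mem_index_iota /realb => /andP [h1 _].
  case: ifP => //; lia.
rewrite (eq_big_nat _ _ (F2 := fun i => ((D m i.+1)%:R : R)^-1)); last first.
  move=> i /andP [_ h]; rewrite /realb; case: ifP => //; lia.
rewrite (@sum_levels R m m2 m) mulrAC divff ?mul1r //; rewrite pnatr_eq0; lia.
Qed.

Lemma real_in {alpha} {S : {set 'I_n}} {i} :
  is_NE cst (fv) alpha S -> i \in S -> realb i /\ wv i / 2 <= alpha i.
Proof.
move=> ne iS; have := @NE_nec R n wv cst alpha S i ne iS.
rewrite /cst; case: ifP => re; last by rewrite /wv re mulr0 ler10.
have w0 := wv_gt0 i re; move=> h; split => //.
rewrite -(ler_pM2r w0); nra.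
Qed.

Lemma eq_core alpha (S : {set 'I_n}) :
  valid_contract alpha -> equal_pay alpha -> is_NE cst (fv) alpha S ->
  principal_util (fv) alpha S <= 2 / m%:R.
Proof.
move=> va ep ne.
have m0 : (0 : R) < m%:R by rewrite ltr0n; lia.
have a0 i : 0 <= alpha i by case/andP: (va i).
have fS0 : 0 <= fv S by apply: sumr_ge0 => i _; exact: wv_ge0.
have [S0 | /set0Pn [i0 i0S]] := eqVneq S finset.set0.
  rewrite /principal_util S0 /fw big_set0 mulr0; apply: divr_ge0 => //; lra.
case: (arg_minnP (fun i : 'I_n => lev m i.+1) i0S) => st stS ismin.
set e := lev m st.+1 in ismin *.
set a := alpha st.
have [rst hast] := real_in ne stS.
have apos : 0 < a by rewrite /a; have := wv_gt0 st rst; lra.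
have aeq j : j \in S -> alpha j = a.
  move=> jS; have [rj hj] := real_in ne jS; have := wv_gt0 j rj => wj.
  apply: ep; rewrite gt_eqF //; lra.
have sumA : #|S|%:R * a <= \sum_i alpha i.
  apply: le_trans (@sum_subT _ _ alpha S a0).
  by rewrite (eq_bigr (fun _ => a)) // sumr_const mulr_natl.
have wst : wv st = ((m * K ^ e.+1)%:R)^-1 by rewrite /wv rst.
set A := ((m * K ^ e.+1)%:R : R)^-1.
set B := ((m * K ^ e.+2)%:R : R)^-1.
have K1' : (1 < K)%N by rewrite /K; lia.
have hK0' : (0 < K)%N by apply: ltnW.
have hm0' : (0 < m)%N by apply: ltnW.
have bound j : j \in S -> wv j <= ((j < K ^ e.+1)%N)%:R * A + B.
  move=> jS; have [rj _] := real_in ne jS.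
  have hm := ismin j jS.
  have B0 : 0 <= B by rewrite invr_ge0 ler0n.
  have A0 : 0 <= A by rewrite invr_ge0 ler0n.
  rewrite /wv rj /D.
  have [E|E] := eqVneq (lev m j.+1) e.
    have jl : (j < K ^ e.+1)%N.
      have h := trunc_log_ltn j.+1 K1'; rewrite /lev in E; rewrite -/K E in h.
      exact: ltn_trans (ltnSn j) h.
    by rewrite jl mul1r E lerDl.
  have hl : (e.+1 <= lev m j.+1)%N by rewrite ltn_neqAle eq_sym E hm.
  have hB : B <= ((j < K ^ e.+1)%N)%:R * A + B by rewrite lerDr mulr_ge0 // ler0n.
  apply: le_trans hB; rewrite /B.
  have hK0 : (0 < K)%N by apply: ltnW.
  have hm0 : (0 < m)%N by apply: ltnW.
  have p1 : (0 < m * K ^ e.+2)%N by rewrite muln_gt0 expn_gt0 hK0 hm0.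
  have p2 : (0 < m * K ^ (lev m j.+1).+1)%N by rewrite muln_gt0 expn_gt0 hK0 hm0.
  rewrite lef_pV2 ?posrE ?ltr0n // ler_nat leq_mul2l leq_exp2l //.
  by rewrite ltnS hl orbT.
have fSb : fv S <= m%:R^-1 + #|S|%:R * B.
  apply: le_trans (ler_sum (P := fun j => j \in S) _ bound) _.
  rewrite big_split /= sumr_const mulr_natl lerD2r -mulr_suml.
  have : \sum_(i in S) (((i < K ^ e.+1)%N)%:R : R) <= (K ^ e.+1)%:R.
    have h0 : forall i : 'I_n, 0 <= (((i < K ^ e.+1)%N)%:R : R) by move=> i; rewrite ler0n.
    apply: le_trans (@sum_subT _ _ _ S h0) _.
    exact: sum_ind_le.
  have -> : m%:R^-1 = (K ^ e.+1)%:R * A.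
    rewrite /A natrM invfM mulrA mulrC mulrA mulVf ?mul1r // pnatr_eq0 expn_eq0; lia.
  move=> h; apply: ler_wpM2r => //; rewrite invr_ge0 ler0n //.
rewrite /principal_util.
have ha : A / 2 <= a by move: hast; rewrite wst.
have BA : B = A / (2 * m%:R).
  rewrite /B /A expnS mulnCA natrM invfM [K%:R]natrM mulrC; congr (_ * _).
have HA : 0 < A by rewrite invr_gt0 ltr0n muln_gt0 expn_gt0 hK0' hm0'.
have mB : m%:R * (#|S|%:R * B) <= #|S|%:R * a.
  rewrite BA; set s := (#|S|%:R : R).
  have s0 : 0 <= s by rewrite ler0n.
  have -> : m%:R * (s * (A / (2 * m%:R))) = s * (A / 2).
    by apply: help1; rewrite gt_eqF.
  by apply: ler_wpM2l.
have : (1 - \sum_i alpha i) * fv S <= (1 - #|S|%:R * a) * fv S.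
  by apply: ler_wpM2r => //; lra.
move=> h; apply: le_trans h _.
have [big|small] := lerP 1 (#|S|%:R * a).
  apply: le_trans (_ : 0 <= _); first nra.
  apply: divr_ge0 => //; lra.
have : #|S|%:R * B <= m%:R^-1.
  rewrite -(ler_pM2l m0) mulfV ?gt_eqF //; lra.
move=> h2.
have : fv S <= m%:R^-1 + m%:R^-1 by lra.
have s0 : 0 <= #|S|%:R * a by apply: mulr_ge0; rewrite ?ler0n; lra.
nra.
Qed.

Lemma fv_le1 (S : {set 'I_n}) : fv S <= 1.
Proof.
apply: le_trans (@sum_subT _ _ _ S wv_ge0) _.
rewrite total lerBlDr lerDl invr_ge0 ler0n //.
Qed.

Lemma valid : valid_instance cst fv.
Proof.
split; first exact: cst_ge0.
split; first by rewrite /fw big_set0.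
split.
  move=> S1 S2 S12; exact: sum_sub (fun i => wv_ge0 i) S12.
move=> S; apply/andP; split; last exact: fv_le1.
by apply: sumr_ge0 => i _; exact: wv_ge0.
Qed.

Lemma additive_fw : additive_reward fv.
Proof. by move=> S; apply: eq_bigr => i _; rewrite /fw big_set1. Qed.

Lemma util_le1 alpha S : valid_contract alpha -> principal_util fv alpha S <= 1.
Proof.
move=> va; rewrite /principal_util.
have s0 : 0 <= \sum_i alpha i by apply: sumr_ge0 => i _; case/andP: (va i).
have f0 : 0 <= fv S by apply: sumr_ge0 => i _; exact: wv_ge0.
have := fv_le1 S; nra.
Qed.

Lemma has_ub P : has_ubound (opt_values cst fv P).
Proof. by exists 1 => u [alpha [S [va [_ [_ ->]]]]]; exact: util_le1. Qed.

Lemma opt_lb : 1 / 4 <= OPT cst fv.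
Proof.
have K4 : (4 : R) <= K%:R by rewrite ler_nat /K; lia.
apply: le_trans (ub_le_sup (has_ub _) _).
2:{ exists (fun i => wv i / 2), [set i : 'I_n | realb i].
    split.
      move=> i; have := wv_ge0 i; have := wv_le1 i; move=> h1 h2; apply/andP; split; lra.
    split => //.
    split.
      apply: NE_suff => i; rewrite inE => ri.
        by rewrite /cst ri; lra.
      by rewrite /cst (negbTE ri) /wv (negbTE ri) mulr0.
    reflexivity. }
rewrite /principal_util -mulr_suml total.
have -> : fv [set i : 'I_n | realb i] = \sum_i wv i.
  rewrite /fw big_mkcond /=; apply: eq_bigr => i _; rewrite inE /wv; by case: (realb i).
rewrite total.
have : K%:R^-1 <= (4 : R)^-1 by rewrite lef_pV2 ?posrE //; lra.
have : (0 : R) <= K%:R^-1 by rewrite invr_ge0 ler0n.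
set k := K%:R^-1; move=> h1 h2. nra.
Qed.

Lemma n0 : (0 < n)%N.
Proof. apply: leq_trans hn; rewrite expn_gt0; apply/orP; left; lia. Qed.

Definition i0 : 'I_n := Ordinal n0.

Lemma real0 : realb i0.
Proof.
rewrite /realb /=. rewrite -{1}(expn0 K) ltn_exp2l /K; lia.
Qed.

Definition alpha0 (i : 'I_n) : R := if i == i0 then wv i0 / 2 else 0.

Lemma witness_eq : opt_values cst fv (@equal_pay R n)
   ((1 - wv i0 / 2) * wv i0).
Proof.
exists alpha0, [set i0].
have w0 := wv_gt0 i0 real0; have w1 := wv_le1 i0.
split.
  move=> i; rewrite /alpha0; case: eqP => _; apply/andP; split; lra.
split.
  move=> i j; rewrite /alpha0; case: (i == i0); case: (j == i0); rewrite ?eqxx //.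
split.
  apply: NE_suff => i; rewrite inE.
    move/eqP => ->; rewrite /cst real0 /alpha0 eqxx; lra.
  move=> h; rewrite /alpha0 (negbTE h) mul0r; exact: cst_ge0.
rewrite /principal_util /fw big_set1.
congr ((1 - _) * _).
rewrite (bigD1 i0) //= /alpha0 eqxx big1 ?addr0 // => i /negbTE ->; done.
Qed.

Lemma opt_eq_pos : 0 < OPT_equal_pay cst fv.
Proof.
have w0 := wv_gt0 i0 real0; have w1 := wv_le1 i0.
have h := ub_le_sup (has_ub (@equal_pay R n)) witness_eq.
apply: (lt_le_trans _ h).
nra.
Qed.

Lemma opt_eq_ub : OPT_equal_pay cst fv <= 2 / m%:R.
Proof.
apply: ge_sup; first by exists ((1 - wv i0 / 2) * wv i0); exact: witness_eq.
by move=> u [alpha [S [va [ep [ne ->]]]]]; exact: eq_core.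
Qed.

Lemma poe_lb : m%:R / 8 <= price_of_equality cst fv.
Proof.
have m0 : (0 : R) < m%:R by rewrite ltr0n; lia.
rewrite /price_of_equality.
have p := opt_eq_pos; have u := opt_eq_ub; have l := opt_lb.
rewrite ler_pdivlMr //.
apply: le_trans l.
apply: le_trans (_ : m%:R / 8 * (2 / m%:R) <= _).
  by apply: ler_wpM2l => //; apply: divr_ge0; lra.
have -> : m%:R / 8 * (2 / m%:R) = 1 / 4 :> R by field; rewrite gt_eqF.
done.
Qed.
End Inst2.


Lemma exists_m n : (16 <= n)%N ->
  exists m, [/\ (2 <= m)%N, ((2 * m) ^ m <= n)%N & (n < (2 * m + 2) ^ (m + 1))%N].
Proof.
elim: n => [|n IH] //.
have [h16|h16] := leqP n.+1 16.
  move=> h; have -> : n.+1 = 16%N by lia.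
  by exists 2%N.
move=> _; have [m [m2 h1 h2]] := IH h16.
have [h'|h'] := ltnP n.+1 ((2 * m + 2) ^ (m + 1)).
  by exists m; split => //; apply: leq_trans h1 _.
have e : n.+1 = ((2 * m + 2) ^ (m + 1))%N by apply/eqP; rewrite eqn_leq h' h2.
exists m.+1; split => //; first lia.
  by rewrite e (_ : (2 * m.+1 = 2 * m + 2)%N) ?addn1 //; lia.
rewrite e; apply: (@leq_ltn_trans ((2 * m.+1 + 2) ^ (m + 1))).
  rewrite leq_exp2r; lia.
rewrite ltn_exp2l; lia.
Qed.

Lemma ln_lb (R : realType) (y : R) : 0 < y -> 1 - y^-1 <= ln y.
Proof.
move=> y0.
have h := @le_ln1Dx R (y^-1 - 1).
have yi : 0 < y^-1 by rewrite invr_gt0.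
have : -1 < y^-1 - 1 by lra.
move/h; rewrite addrC subrK lnV ?posrE //; lra.
Qed.

Lemma real_part (R : realType) (m n : nat) : (2 <= m)%N ->
  ((2 * m) ^ m <= n)%N -> (n < (2 * m + 2) ^ (m + 1))%N ->
  1 / 96 * (ln (n%:R : R) / ln (ln (n%:R : R))) <= m%:R / 8.
Proof.
move=> m2 h1 h2.
have hm0 : (0 < m)%N by lia.
have m0 : (0 : R) < m%:R by rewrite ltr0n; lia.
have mge2 : (2 : R) <= m%:R by rewrite ler_nat.
have n0 : (0 < n)%N by apply: leq_trans h1; rewrite expn_gt0; lia.
have x0 : (0 : R) < n%:R by rewrite ltr0n.
set L := ln (n%:R : R).
have lnm : 0 < ln (m%:R : R) by apply: ln_gt0; lra.
have U1 : L < (m + 1)%:R * ln ((2 * m + 2)%:R : R).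
  rewrite /L mulr_natl -lnXn ?ltr0n; last lia.
  rewrite ltr_ln ?posrE ?exprn_gt0 ?ltr0n //; last lia.
  by rewrite -natrX ltr_nat.
have U2 : ln ((2 * m + 2)%:R : R) <= 3 * ln (m%:R : R).
  have p : (0 < 2 * m + 2)%N by lia.
  rewrite -[3]/(3%:R) mulr_natl -lnXn // ler_ln ?posrE ?exprn_gt0 ?ltr0n //.
  rewrite -natrX ler_nat expnS expnS expn1; nia.
have U3 : 0 <= ln ((2 * m + 2)%:R : R) by apply: ln_ge0; rewrite ler1n; lia.
have U : L <= 6 * m%:R * ln (m%:R : R).
  have hm1 : ((m + 1)%:R : R) <= 2 * m%:R by rewrite natrD; lra.
  have a1 : (m + 1)%:R * ln ((2 * m + 2)%:R : R) <= (m + 1)%:R * (3 * ln (m%:R : R)).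
    by apply: ler_wpM2l => //; rewrite ler0n.
  have a2 : ((m + 1)%:R : R) * (3 * ln (m%:R : R)) <= 2 * m%:R * (3 * ln (m%:R : R)).
    by apply: ler_wpM2r => //; lra.
  lra.
have L1 : m%:R * ln ((2 * m)%:R : R) <= L.
  rewrite /L mulr_natl -lnXn ?ltr0n; last lia.
  rewrite ler_ln ?posrE ?exprn_gt0 ?ltr0n //; last lia.
  by rewrite -natrX ler_nat.
have L2 : 3 / 4 <= ln ((2 * m)%:R : R).
  have p2 : (0:R) < (2 * m)%:R by rewrite ltr0n; lia.
  apply: le_trans (@ln_lb R _ p2).
  have : (4 : R) <= (2 * m)%:R by rewrite natrM; lra.
  move=> h; have : ((2 * m)%:R : R)^-1 <= 4^-1 by rewrite lef_pV2 ?posrE //; lra.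
  lra.
have L3 : 3 / 4 * m%:R <= L by nra.
have lnL : 1 / 2 * ln (m%:R : R) <= ln L.
  have q0 : (0 : R) < 3 / 4 * m%:R by lra.
  apply: le_trans (_ : ln (3 / 4 * m%:R) <= _); last first.
    by rewrite ler_ln ?posrE //; lra.
  have : ln (m%:R : R) <= ln ((3 / 4 * m%:R) ^+ 2).
    rewrite ler_ln ?posrE ?exprn_gt0 //; nra.
  rewrite lnXn //; lra.
have lnL0 : 0 < ln L by lra.
have : L / ln L <= 12 * m%:R.
  rewrite ler_pdivrMr //; nra.
lra.
Qed.

Theorem proposition5p2 (R : realType) :
  exists (C : R) (N : nat), 0 < C /\
    forall n : nat, (N <= n)%N ->
      exists (cost : 'I_n -> R) (f : {set 'I_n} -> R),
        valid_instance cost f /\ additive_reward f /\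
        C * (ln (n%:R) / ln (ln (n%:R))) <= price_of_equality cost f.
Proof.
exists (1 / 96), 16%N; split; first lra.
move=> n hn; have [m [m2 h1 h2]] := exists_m n hn.
exists (cst R m n), (fw R n (wv R m n)); split; first exact: valid R m n m2 h1.
split; first exact: (additive_fw R m n).
apply: le_trans (poe_lb R m n m2 h1).
exact: real_part R m n m2 h1 h2.
Qed.
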